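(* Let $\Theta$ be a causal theory over $\mathfrak L$ and $M\in\mathfrak M$. Then $M$ is causally explained by $\Theta$ if and only if, as a world of the Kripke model $K_\Theta$, $M\Vdash(\Box p\to p)\wedge(p\to\Box p)$ for every $p\in\mathcal L_\Box$.
   Context: $\mathfrak L$ is a classical propositional language with classical consequence $\vdash$; $\mathrm{Cn}(X)$ is the $\vdash$-closure of $X$; $\mathfrak M$ is the set of models (valuations) of $\mathfrak L$. A causal rule is $\phi\triangleright\psi$ with $\phi,\psi\in\mathfrak L$; a causal theory $\Theta$ is a set of causal rules. For $M\in\mathfrak M$, $M^{\Theta}=\mathrm{Cn}(\{\psi : \phi\triangleright\psi\in\Theta,\ M\Vdash\phi\})$, and $M$ is causally explained by $\Theta$ iff $M$ is the only model of $M^\Theta$. $R_\Theta$ on $\mathfrak M$: $M\,R_\Theta\,M'$ iff for every $\phi\triangleright\psi\in\Theta$, $M\Vdash\phi$ implies $M'\Vdash\psi$. $\mathcal L_\Box$ is generated by $\mathfrak L$ and a unary operator $\Box$. The Kripke model $K_\Theta$ has worlds $\mathfrak M$, accessibility $R_\Theta$, atoms forced as in the valuation, Boolean connectives classical, and $M\Vdash\Box p$ iff $M'\Vdash p$ for all $M'$ with $M\,R_\Theta\,M'$. *)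

(* Defs.v *)
From Stdlib Require Import Classical.

Set Implicit Arguments.

Section Defs.
Variable Atom : Type.

Inductive form : Type :=
| FVar : Atom -> form
| FBot : form
| FTop : form
| FNeg : form -> form
| FAnd : form -> form -> form
| FOr  : form -> form -> form
| FImp : form -> form -> form.

Definition model := Atom -> bool.

Fixpoint sat (M : model) (f : form) : Prop :=
  match f with
  | FVar a => M a = true
  | FBot => False
  | FTop => True
  | FNeg p => ~ sat M p
  | FAnd p q => sat M p /\ sat M q
  | FOr p q => sat M p \/ sat M q
  | FImp p q => sat M p -> sat M q
  end.

(* Classical consequence X ⊢ φ (semantic, by completeness of classical
   propositional logic) and its closure Cn(X). *)
Definition entails (X : form -> Prop) (phi : form) : Prop :=
  forall M : model, (forall psi, X psi -> sat M psi) -> sat M phi.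

Definition Cn (X : form -> Prop) : form -> Prop := fun phi => entails X phi.

Record crule : Type := CRule { cr_body : form; cr_head : form }.
Definition ctheory := crule -> Prop.

Definition heads (Th : ctheory) (M : model) : form -> Prop :=
  fun psi => exists phi, Th (CRule phi psi) /\ sat M phi.

Definition MTheta (Th : ctheory) (M : model) : form -> Prop := Cn (heads Th M).

Definition is_model_of (M : model) (X : form -> Prop) : Prop :=
  forall phi, X phi -> sat M phi.

Definition causally_explained (Th : ctheory) (M : model) : Prop :=
  is_model_of M (MTheta Th M) /\
  forall M' : model, is_model_of M' (MTheta Th M) -> M' = M.

Definition RTheta (Th : ctheory) (M M' : model) : Prop :=
  forall phi psi, Th (CRule phi psi) -> sat M phi -> sat M' psi.

Inductive mform : Type :=
| MVar : Atom -> mform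
| MBot : mform
| MTop : mform
| MNeg : mform -> mform
| MAnd : mform -> mform -> mform
| MOr  : mform -> mform -> mform
| MImp : mform -> mform -> mform
| MBox : mform -> mform.

(* Forcing in the Kripke model K_Θ (worlds 𝔐, accessibility R_Θ) *)
Fixpoint forces (Th : ctheory) (M : model) (p : mform) : Prop :=
  match p with
  | MVar a => M a = true
  | MBot => False
  | MTop => True
  | MNeg q => ~ forces Th M q
  | MAnd q r => forces Th M q /\ forces Th M r
  | MOr q r => forces Th M q \/ forces Th M r
  | MImp q r => forces Th M q -> forces Th M r
  | MBox q => forall M', RTheta Th M M' -> forces Th M' q
  end.

End Defs.

(* Main.v *)
Require Import Defs.
From Stdlib Require Import Classical FunctionalExtensionality.

Lemma model_iff (Atom : Type) (Th : ctheory Atom) (M M' : model Atom) :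
  is_model_of M' (MTheta Th M) <-> RTheta Th M M'.
Proof.
  split.
  - intros H phi psi Hr Hs. apply H. intros N HN. apply HN. exists phi; auto.
  - intros H phi Hphi. apply Hphi. intros psi [phi' [Hr Hs]]. eapply H; eauto.
Qed.

Theorem mainTheorem4 (Atom : Type) (Th : ctheory Atom) (M : model Atom) :
  causally_explained Th M <->
  (forall p : mform Atom,
      forces Th M (MAnd (MImp (MBox p) p) (MImp p (MBox p)))).
Proof.
  unfold causally_explained. split.
  - intros [H1 H2] p. simpl.
    assert (HR : forall M', RTheta Th M M' <-> M' = M).
    { intros M'. split.
      - intros HR. apply H2. apply model_iff. auto.
      - intros ->. apply model_iff. auto. }
    split.
    + intros Hb. apply Hb. apply HR. reflexivity.
    + intros Hp M' HM'. apply HR in HM'. subst. auto.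
  - intros H.
    assert (Hsub : forall M', RTheta Th M M' -> M' = M).
    { intros M' HM'. apply functional_extensionality. intros a.
      destruct (M a) eqn:E.
      - destruct (H (MVar a)) as [_ H2]. simpl in H2. apply (H2 E M' HM').
      - destruct (H (MNeg (MVar a))) as [_ H2]. simpl in H2.
        assert (Hn : ~ M a = true) by (rewrite E; discriminate).
        specialize (H2 Hn M' HM'). destruct (M' a); auto. exfalso; auto. }
    assert (Hne : exists M', RTheta Th M M').
    { destruct (H (MBot Atom)) as [H1 _]. simpl in H1.
      apply NNPP. intros Hn. apply H1. intros M' HM'. apply Hn. eauto. }
    destruct Hne as [M' HM']. pose proof (Hsub _ HM'). subst M'.
    split.
    + apply model_iff. auto.
    + intros N HN. apply Hsub. apply model_iff. auto.
Qed.
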